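(* Let $G$ be a connected graph. Then $KB_e(G)$ is connected if and only if there is no set of vertices $S \subsetneq V(G)$ such that (i) $N_{\overline{S}}(v)=N_{\overline{S}}(w)$ for every $v,w\in S$, and (ii) the induced subgraph $G[S]$ has at least one edge.
   Context: All graphs are finite, simple and undirected. A biclique of a graph $G$ is a maximal (with respect to inclusion) induced subgraph of $G$ that is a complete bipartite graph $K_{p,q}$ with $p,q\ge 1$. The edge-biclique graph $KB_e(G)$ is the graph with one vertex for each biclique of $G$, in which two distinct vertices are adjacent if and only if the corresponding bicliques of $G$ have at least one edge in common. For $S\subseteq V(G)$, $\overline{S}=V(G)\setminus S$, and for a vertex $v$, $N_{\overline{S}}(v)=N(v)\cap \overline{S}$ is the set of neighbours of $v$ lying in $\overline{S}$. *)

(* Defs.v *)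
(* A finite simple graph = symmetric irreflexive rel on a finType. *)
From mathcomp Require Import all_boot.
Set Implicit Arguments. Unset Strict Implicit. Unset Printing Implicit Defensive.

Section Graph.
Variables (T : finType) (e : rel T).

Definition connected_graph : Prop := forall x y : T, connect e x y.

Definition induced_cbip (B : {set T}) : bool :=
  [exists X : {set T}, exists Y : {set T},
     [&& X :|: Y == B, [disjoint X & Y], X != set0, Y != set0,
         [forall x in X, forall y in Y, e x y],
         [forall x in X, forall x' in X, ~~ e x x'] &
         [forall y in Y, forall y' in Y, ~~ e y y']]].

Definition is_biclique (B : {set T}) : bool :=
  induced_cbip B &&
  [forall B' : {set T}, ((B \subset B') && induced_cbip B') ==> (B' == B)].

(* Adjacency in the edge-biclique graph KB_e(G): distinct bicliques sharing an edge
   (an edge of an induced subgraph G[B] is an edge of G with both ends in B). *)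
Definition kbe_adj (B1 B2 : {set T}) : bool :=
  [&& is_biclique B1, is_biclique B2, B1 != B2 &
      [exists u, exists v, [&& e u v, u \in B1, v \in B1, u \in B2 & v \in B2]]].

Definition KBe_connected : Prop :=
  forall B1 B2 : {set T}, is_biclique B1 -> is_biclique B2 -> connect kbe_adj B1 B2.

Definition nbhd_out (S : {set T}) (v : T) : {set T} := [set u in ~: S | e v u].

End Graph.

(* Main.v *)
Require Import Defs.
From mathcomp Require Import all_boot.
Set Implicit Arguments. Unset Strict Implicit. Unset Printing Implicit Defensive.

Section S.
Variables (T : finType) (e : rel T).
Hypotheses (e_sym : symmetric e) (e_irr : irreflexive e).

Definition cbip_sides (B X Y : {set T}) :=
  [/\ X :|: Y = B, [disjoint X & Y], X != set0 /\ Y != set0,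
     (forall x y, x \in X -> y \in Y -> e x y) &
     (forall x x', x \in X -> x' \in X -> ~~ e x x') /\
     (forall y y', y \in Y -> y' \in Y -> ~~ e y y')].

Lemma cbipE B : induced_cbip e B -> exists X Y, cbip_sides B X Y.
Proof.
case/existsP=> X /existsP[Y] /and5P[/eqP XY dis X0 Y0 /and3P[/forallP fXY /forallP fX /forallP fY]].
exists X, Y; split=> //; try split.
- by move=> x y xX yY; move: (fXY x); rewrite xX => /forallP/(_ y); rewrite yY.
- by move=> x y xX yY; move: (fX x); rewrite xX => /forallP/(_ y); rewrite yY.
- by move=> x y xX yY; move: (fY x); rewrite xX => /forallP/(_ y); rewrite yY.
Qed.

Lemma cbipI B X Y : cbip_sides B X Y -> induced_cbip e B.
Proof.
case=> <- dis [X0 Y0] fXY [fX fY]; apply/existsP; exists X; apply/existsP; exists Y.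
rewrite eqxx dis X0 Y0 /=; apply/and3P; split; apply/forallP=> x; apply/implyP=> xX;
  apply/forallP=> y; apply/implyP=> yY; auto.
Qed.

Lemma cbip_edge u v : e u v -> induced_cbip e [set u; v].
Proof.
move=> uv; apply: (@cbipI _ [set u] [set v]); split.
- by [].
- by rewrite disjoints1 inE; apply: contraTneq uv => ->; rewrite e_irr.
- by split; apply/set0Pn; [exists u | exists v]; rewrite inE.
- by move=> x y; rewrite !inE => /eqP-> /eqP->.
- by split=> x y; rewrite !inE => /eqP-> /eqP->; rewrite e_irr.
Qed.

Lemma cbip_P3 q p r : e q p -> e q r -> ~~ e p r -> induced_cbip e [set q; p; r].
Proof.
move=> qp qr npr; apply: (@cbipI _ [set q] [set p; r]); split.
- by apply/setP=> x; rewrite !inE orbA.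
- rewrite disjoints1 !inE negb_or; apply/andP; split.
    by apply: contraTneq qp => ->; rewrite e_irr.
  by apply: contraTneq qr => ->; rewrite e_irr.
- by split; apply/set0Pn; [exists q | exists p]; rewrite !inE ?eqxx.
- by move=> x y; rewrite !inE => /eqP-> /orP[] /eqP->.
- split=> x y; rewrite !inE; first by move=> /eqP-> /eqP->; rewrite e_irr.
  by case/orP=> /eqP-> /orP[] /eqP->; rewrite ?e_irr // e_sym.
Qed.

Lemma ext_biclique B : induced_cbip e B -> exists B', is_biclique e B' && (B \subset B').
Proof.
move=> cB; have [B' mB' sBB'] := maxset_exists (P := induced_cbip e) cB.
exists B'; rewrite sBB' andbT; case/maxsetP: mB' => cB' mx.
rewrite /is_biclique cB' /=; apply/forallP=> C; apply/implyP=> /andP[sC cC].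
by rewrite (mx C cC sC).
Qed.


Lemma sides_edge B X Y a b : cbip_sides B X Y -> a \in B -> b \in B -> e a b ->
  (a \in X /\ b \in Y) \/ (a \in Y /\ b \in X).
Proof.
case=> <- _ _ _ [fX fY]; rewrite !inE => /orP[] aX /orP[] bX ab.
- by move: (fX a b aX bX); rewrite ab.
- by left.
- by right.
- by move: (fY a b aX bX); rewrite ab.
Qed.

Definition modl (S : {set T}) :=
  forall v w, v \in S -> w \in S -> nbhd_out e S v = nbhd_out e S w.

Lemma modl_adj S v w x : modl S -> v \in S -> w \in S -> x \notin S -> e v x -> e w x.
Proof.
move=> mS vS wS xS vx; have : x \in nbhd_out e S v by rewrite inE inE xS vx.
by rewrite (mS v w vS wS) !inE => /andP[].
Qed.

Lemma biclique_in_S S B u v : modl S -> is_biclique e B -> u \in B -> v \in B ->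
  u \in S -> v \in S -> e u v -> B \subset S.
Proof.
move=> mS /andP[/cbipE[X [Y sd]] _] uB vB uS vS uv.
have sd' := sd; case: sd' => BXY _ _ fXY [fX fY].
apply/subsetP=> w wB; apply/negPn/negP=> wS.
have [[uX vY]|[uY vX]] := sides_edge sd uB vB uv;
  move: wB; rewrite -BXY inE => /orP[] wX.
- have h : e v w by rewrite e_sym; apply: fXY.
  by have := fX u w uX wX; rewrite (modl_adj mS vS uS wS h).
- have h : e u w by apply: fXY.
  by have := fY v w vY wX; rewrite (modl_adj mS uS vS wS h).
- have h : e u w by rewrite e_sym; apply: fXY.
  by have := fX v w vX wX; rewrite (modl_adj mS uS vS wS h).
- have h : e v w by apply: fXY.
  by have := fY u w uY wX; rewrite (modl_adj mS vS uS wS h).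
Qed.

Lemma connect_in_S S B1 B2 : modl S -> connect (kbe_adj e) B1 B2 -> B1 \subset S ->
  B2 \subset S.
Proof.
move=> mS /connectP[p pth ->]; elim: p B1 pth => //= B p IH B1 /andP[adj pth] s1.
apply: IH pth _; case/and4P: adj => _ bB _ /existsP[u /existsP[v /and5P[uv u1 v1 u2 v2]]].
apply: (biclique_in_S mS bB u2 v2 _ _ uv); exact: (subsetP s1).
Qed.

Lemma crossing (S : {set T}) u x : connect e u x -> u \in S -> x \notin S ->
  exists s y, [/\ s \in S, y \notin S & e s y].
Proof.
move=> /connectP[p pth ->]; elim: p u pth => /= [|y p IH] u; first by move=> _ ->.
case/andP=> uy pth uS lS; case: (boolP (y \in S)) => yS.
  exact: IH pth yS lS.
by exists u, y.
Qed.

Lemma dir1 : connected_graph e -> KBe_connected e ->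
  ~ (exists S : {set T},
       [/\ S \proper [set: T],
           (forall v w, v \in S -> w \in S -> nbhd_out e S v = nbhd_out e S w) &
           (exists u v, [/\ u \in S, v \in S & e u v])]).
Proof.
move=> Gc Kc [S [prS mS [u [v [uS vS uv]]]]].
have [x xS] : exists x, x \notin S.
  case/properP: prS => _ [x _ xS]; by exists x.
have [s [y [sS yS sy]]] := crossing (Gc u x) uS xS.
have [B1 /andP[b1 s1]] := ext_biclique (cbip_edge uv).
have [B2 /andP[b2 s2]] := ext_biclique (cbip_edge sy).
have inB1 : forall z, z \in [set u; v] -> z \in B1 by apply/subsetP.
have inB2 : forall z, z \in [set s; y] -> z \in B2 by apply/subsetP.
have B1S : B1 \subset S.
  apply: (biclique_in_S mS b1 (inB1 u _) (inB1 v _) uS vS uv); by rewrite !inE eqxx ?orbT.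
have := connect_in_S mS (Kc B1 B2 b1 b2) B1S.
move/subsetP/(_ y (inB2 y _)); rewrite !inE eqxx orbT => /(_ isT).
by rewrite (negbTE yS).
Qed.


Lemma kbe_sym : symmetric (kbe_adj e).
Proof.
suff H : forall B1 B2, kbe_adj e B1 B2 -> kbe_adj e B2 B1.
  by move=> B1 B2; apply/idP/idP; apply: H.
move=> B1 B2 /and4P[b1 b2 ne /existsP[u /existsP[v /and5P[uv u1 v1 u2 v2]]]].
rewrite /kbe_adj b1 b2 eq_sym ne; apply/existsP; exists u; apply/existsP; exists v.
by rewrite uv u1 v1 u2 v2.
Qed.

Section Dir2.
Variable B0 : {set T}.
Hypothesis b0 : is_biclique e B0.

Definition kc B := connect (kbe_adj e) B0 B.
Definition Good a b := e a b && [exists B, [&& is_biclique e B, a \in B, b \in B & kc B]].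

Lemma Good_sym a b : Good a b -> Good b a.
Proof.
case/andP=> ab /existsP[B /and4P[bB aB bB' kB]]; rewrite /Good e_sym ab.
by apply/existsP; exists B; rewrite bB aB bB' kB.
Qed.

Lemma GoodI B a b : is_biclique e B -> kc B -> a \in B -> b \in B -> e a b -> Good a b.
Proof. by move=> bB kB aB bB' ab; rewrite /Good ab; apply/existsP; exists B; rewrite bB aB bB' kB. Qed.

Lemma share B B' u v : is_biclique e B -> is_biclique e B' -> u \in B -> v \in B ->
  u \in B' -> v \in B' -> e u v -> kc B -> kc B'.
Proof.
move=> bB bB' u1 v1 u2 v2 uv kB; case: (eqVneq B B') => [<- //|ne].
apply: (connect_trans kB); apply: connect1; rewrite /kbe_adj bB bB' ne.
by apply/existsP; exists u; apply/existsP; exists v; rewrite uv u1 v1 u2 v2.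
Qed.

Lemma Good_P3 q p r : Good q p -> e q r -> ~~ e p r -> Good q r.
Proof.
case/andP=> qp /existsP[B /and4P[bB qB pB kB]] qr npr.
have [B' /andP[bB' sB']] := ext_biclique (cbip_P3 qp qr npr).
have inB' : forall z, z \in [set q; p; r] -> z \in B' by apply/subsetP.
have q' : q \in B' by apply: inB'; rewrite !inE eqxx.
have p' : p \in B' by apply: inB'; rewrite !inE eqxx orbT.
have r' : r \in B' by apply: inB'; rewrite !inE eqxx !orbT.
apply: (GoodI bB' _ q' r' qr); exact: (share bB bB' qB pB q' p' qp kB).
Qed.

Section Propag.
Variable F : T -> T -> bool.
Hypothesis Fsym : forall a b, F a b -> F b a.
Hypothesis Fstep : forall p q r, F p q -> Good q r -> ~~ e p r -> F q r.

Definition AllF (B : {set T}) := forall a b, a \in B -> b \in B -> e a b -> F a b.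

Lemma within B a b : is_biclique e B -> kc B -> a \in B -> b \in B -> e a b -> F a b ->
  AllF B.
Proof.
move=> bB kB aB bB' ab Fab.
have [X [Y sd]] : exists X Y, cbip_sides B X Y by case/andP: bB => /cbipE.
have sd' := sd; case: sd' => BXY _ _ fXY [fX fY].
have inB : forall z, z \in X \/ z \in Y -> z \in B.
  by move=> z h; rewrite -BXY inE; case: h => ->; rewrite ?orbT.
have key : forall a b, a \in X -> b \in Y -> F a b -> forall a' b', a' \in X -> b' \in Y -> F a' b'.
  move=> a1 b1 a1X b1Y F1 a' b' a'X b'Y.
  have F2 : F a1 b'.
    apply: (Fstep (Fsym F1)) (fY _ _ b1Y b'Y).
    apply: (GoodI bB kB (inB _ (or_introl a1X)) (inB _ (or_intror b'Y))); exact: fXY.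
  apply: Fsym; apply: (Fstep F2) (fX _ _ a1X a'X).
  apply: (GoodI bB kB (inB _ (or_intror b'Y)) (inB _ (or_introl a'X))); rewrite e_sym; exact: fXY.
move=> a' b' a'B b'B a'b'.
have [[aX bY]|[aY bX]] := sides_edge sd aB bB' ab;
  have [[a'X b'Y]|[a'Y b'X]] := sides_edge sd a'B b'B a'b'.
- exact: key Fab _ _ a'X b'Y.
- exact: Fsym (key _ _ aX bY Fab _ _ b'X a'Y).
- exact: key _ _ bX aY (Fsym Fab) _ _ a'X b'Y.
- exact: Fsym (key _ _ bX aY (Fsym Fab) _ _ b'X a'Y).
Qed.

Lemma across B B' : is_biclique e B -> kc B -> connect (kbe_adj e) B B' -> AllF B -> AllF B'.
Proof.
move=> bB kB /connectP[p pth ->]; elim: p B bB kB pth => //= B1 p IH B bB kB /andP[adj pth] AB.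
case/and4P: (adj) => _ b1 _ /existsP[u /existsP[v /and5P[uv u1 v1 u2 v2]]].
have k1 : kc B1 by apply: (connect_trans kB); apply: connect1.
apply: (IH B1 b1 k1 pth); exact: (within b1 k1 u2 v2 uv (AB u v u1 v1 uv)).
Qed.

End Propag.


Definition Zs := [set z | [exists y, Good z y]].

Lemma ZsP z : reflect (exists y, Good z y) (z \in Zs).
Proof. by rewrite inE; apply: (iffP existsP). Qed.

Lemma GoodE a b : Good a b ->
  exists B, [/\ is_biclique e B, kc B, a \in B, b \in B & e a b].
Proof. by case/andP=> ab /existsP[B /and4P[bB aB bB' kB]]; exists B. Qed.

Lemma adjA x a b : x \notin Zs -> Good a b -> e a x -> e b x.
Proof.
move=> xZ gab ax; apply/negPn/negP=> nbx.
have gax := Good_P3 gab ax nbx.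
by move: xZ; apply/negP/negPn/ZsP; exists a; apply: Good_sym.
Qed.

Lemma connect_kc B1 B2 : kc B1 -> kc B2 -> connect (kbe_adj e) B1 B2.
Proof.
move=> k1 k2; apply: connect_trans k2; rewrite (sym_connect_sym kbe_sym); exact: k1.
Qed.

Lemma Zs_mod : modl Zs.
Proof.
suff H : forall v w, v \in Zs -> w \in Zs -> nbhd_out e Zs v \subset nbhd_out e Zs w.
  by move=> v w vZ wZ; apply/eqP; rewrite eqEsubset !H.
move=> v w /ZsP[y gvy] /ZsP[y' gwy']; apply/subsetP=> x; rewrite !inE => /andP[xZ vx].
rewrite xZ /=.
have {}xZ : x \notin Zs by rewrite inE.
have [Bv [bv kv vB yB vy]] := GoodE gvy.
have [Bw [bw kw wB yB' wy]] := GoodE gwy'.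
pose F := fun a b => e a x && e b x.
have Fsym : forall a b, F a b -> F b a by move=> a b; rewrite /F andbC.
have Fstep : forall p q r, F p q -> Good q r -> ~~ e p r -> F q r.
  move=> p q r /andP[_ qx] gqr _; rewrite /F qx /=; exact: adjA xZ gqr qx.
have Av : AllF F Bv.
  apply: (within Fsym Fstep bv kv vB yB vy); rewrite /F vx /=; exact: adjA xZ gvy vx.
have Aw := across Fsym Fstep bv kv (connect_kc kv kw) Av.
by case/andP: (Aw w y' wB yB' wy).
Qed.

Lemma Zs_edge : exists u v, [/\ u \in Zs, v \in Zs & e u v].
Proof.
case/andP: (b0) => /cbipE[X [Y [BXY _ [X0 Y0] fXY _]]] _.
case/set0Pn: X0 => u uX; case/set0Pn: Y0 => v vY.
have uv := fXY u v uX vY.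
have uB : u \in B0 by rewrite -BXY inE uX.
have vB : v \in B0 by rewrite -BXY inE vY orbT.
have g := GoodI b0 (connect0 _ _) uB vB uv.
exists u, v; split=> //; apply/ZsP; [exists v | exists u] => //; exact: Good_sym.
Qed.

Lemma Klocal v w y : Zs = setT -> e v w -> ~~ Good v w -> Good v y -> Good w y.
Proof.
move=> ZT vw ngvw gvy; apply/negPn/negP=> ngwy.
pose F := fun a b => [&& e a w, e b w, ~~ Good w a & ~~ Good w b].
have Fsym : forall a b, F a b -> F b a.
  by move=> a b /and4P[h1 h2 h3 h4]; rewrite /F h1 h2 h3 h4.
have Fstep : forall p q r, F p q -> Good q r -> ~~ e p r -> F q r.
  move=> p q r /and4P[pw qw ngp ngq] gqr npr; rewrite /F qw ngq /=.
  have rw : e r w.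
    apply/negPn/negP=> nrw; move/negP: ngq; apply; apply: Good_sym.
    exact: Good_P3 gqr qw nrw.
  rewrite rw /=; apply/negP=> gwr; move/negP: ngp; apply.
  by apply: Good_P3 gwr _ _; rewrite e_sym // e_sym.
have [Bv [bv kv vB yB vy]] := GoodE gvy.
have wZ : w \in Zs by rewrite ZT inE.
case/ZsP: wZ => t gwt.
have [Bt [bt kt wB tB wt]] := GoodE gwt.
have yw : e y w.
  apply/negPn/negP=> nyw; move/negP: ngvw; apply; exact: Good_P3 gvy vw nyw.
have Av : AllF F Bv.
  apply: (within Fsym Fstep bv kv vB yB vy); rewrite /F vw yw ngwy andbT /=.
  apply/negP=> g; move/negP: ngvw; apply; exact: Good_sym.
have At := across Fsym Fstep bv kv (connect_kc kv kt) Av.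
by case/and4P: (At w t wB tB wt); rewrite e_irr.
Qed.

Lemma all_Good (noS : ~ (exists S : {set T},
       [/\ S \proper [set: T], modl S &
           (exists u v, [/\ u \in S, v \in S & e u v])])) :
  forall u w, e u w -> Good u w.
Proof.
have ZT : Zs = setT.
  apply/eqP; apply/negPn/negP=> nT; apply: noS; exists Zs; split.
  - by rewrite properT.
  - exact: Zs_mod.
  - exact: Zs_edge.
move=> u w uw; apply/negPn/negP=> nguw.
pose nG := [rel a b | e a b && ~~ Good a b].
have NCg : forall a p, path nG a p -> forall y, Good a y = Good (last a p) y.
  move=> a p; elim: p a => //= b p IH a /andP[/andP[ab ngab] pth] y.
  rewrite -(IH b pth y); apply/idP/idP => g.
    exact: Klocal ZT ab ngab g.
  apply: Klocal ZT _ _ g; first by rewrite e_sym.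
  by apply/negP=> /Good_sym; apply/negP.
pose M := [set z | connect nG u z].
have NC : forall z, z \in M -> forall y, Good z y = Good u y.
  move=> z; rewrite inE => /connectP[p pth ->] y; by rewrite -NCg.
have uM : u \in M by rewrite inE connect0.
have wM : w \in M by rewrite inE; apply: connect1; rewrite /= uw nguw.
apply: noS; exists M; split.
- rewrite properT; have : u \in Zs by rewrite ZT inE.
  case/ZsP=> y guy; apply/negP=> /eqP MT.
  have yM : y \in M by rewrite MT inE.
  by move: (NC y yM y); rewrite guy /Good e_irr.
- suff H : forall v w, v \in M -> w \in M -> nbhd_out e M v \subset nbhd_out e M w.
    by move=> v w' vM wM'; apply/eqP; rewrite eqEsubset !H.
  move=> v w' vM wM'; apply/subsetP=> x; rewrite !inE => /andP[xM vx].
  rewrite xM /=.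
  have gvx : Good v x.
    apply/negPn/negP=> ng; move/negP: xM; apply.
    move: vM; rewrite inE => cv; apply: connect_trans cv _; apply: connect1.
    by rewrite /= vx ng.
  by move: gvx; rewrite (NC v vM) -(NC w' wM') => /andP[].
- by exists u, w.
Qed.

Lemma all_conn (noS : ~ (exists S : {set T},
       [/\ S \proper [set: T], modl S &
           (exists u v, [/\ u \in S, v \in S & e u v])])) B :
  is_biclique e B -> kc B.
Proof.
move=> bB; have bB' := bB.
case/andP: bB' => /cbipE[X [Y [BXY _ [X0 Y0] fXY _]]] _.
case/set0Pn: X0 => u uX; case/set0Pn: Y0 => v vY.
have uv := fXY u v uX vY.
have uB : u \in B by rewrite -BXY inE uX.
have vB : v \in B by rewrite -BXY inE vY orbT.
have [B1 [b1 k1 u1 v1 _]] := GoodE (all_Good noS uv).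
exact: share b1 bB u1 v1 uB vB uv k1.
Qed.

End Dir2.
End S.

Theorem theorem1 (T : finType) (e : rel T)
  (e_sym : symmetric e) (e_irr : irreflexive e)
  (Gconn : connected_graph e) :
  KBe_connected e <->
  ~ (exists S : {set T},
       [/\ S \proper [set: T],
           (forall v w, v \in S -> w \in S -> nbhd_out e S v = nbhd_out e S w) &
           (exists u v, [/\ u \in S, v \in S & e u v])]).
Proof.
split; first exact: dir1.
move=> noS B1 B2 b1 b2.
exact: (all_conn e_sym e_irr b1 noS b2).
Qed.
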